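(* If two quadrilaterals in $K^2$ in standard form share the same coefficient and the same centroid, then both quadrilaterals have the same bisectors (with the same midpoints).
   Context: $K$ is a field of characteristic $\neq 2$; we work in $K^2$ inside the projective plane. A quadrilateral $Q=ABA'B'$ consists of four distinct lines $A,B,A',B'$ (sides), not all through one point, with adjacent sides ($A,B$; $B,A'$; $A',B'$; $B',A$) not parallel; opposite sides may be parallel. Vertices: $A\cap B$, $B\cap A'$, $A'\cap B'$, $B'\cap A$. The centroid is the average of the four vertices. $Q$ is in standard form if $A$ is the line $Y=0$ and $A'$ is the line $X=0$; its coefficient is the product of the slopes of $B$ and $B'$. A line $\ell$ crosses a pair $\{\ell_1,\ell_2\}$ if it is distinct from both and not parallel to both; $\mathrm{mid}_{\{\ell_1,\ell_2\}}(\ell)$ is the midpoint of the points where $\ell$ meets $\ell_1,\ell_2$ (the point at infinity of $\ell$ if one of them is at infinity). $\ell$ bisects $Q$ (is a bisector) if $\mathrm{mid}_{\mathsf P}(\ell)$ is the same for all pairs $\mathsf P$ among $\{A,A'\},\{B,B'\}$ that $\ell$ crosses; this common point is the midpoint of the bisector. A bisector is regarded as the line together with its midpoint. *)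

(* Defs.v *)
From HB Require Import structures.
From mathcomp Require Import all_boot all_order all_algebra.
Set Implicit Arguments. Unset Strict Implicit. Unset Printing Implicit Defensive.
Import Order.TTheory GRing.Theory.
Local Open Scope ring_scope.

Section Geometry.
Variable K : fieldType.

Definition point := (K * K)%type.

Record line := Line { la : K; lb : K; lc : K; lnz : (la != 0) || (lb != 0) }.

Definition on_line (l : line) (p : point) : bool :=
  la l * p.1 + lb l * p.2 == lc l.

Definition line_eq (l1 l2 : line) : Prop :=
  forall p, on_line l1 p = on_line l2 p.

(* parallel = same direction (an affine line is parallel to itself) *)
Definition parallel (l1 l2 : line) : bool :=
  la l1 * lb l2 == lb l1 * la l2.

Definition midpt (p q : point) : point :=
  ((p.1 + q.1) / 2%:R, (p.2 + q.2) / 2%:R).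

Definition slope (l : line) : K := - la l / lb l.

(* A quadrilateral Q = A B A' B' (sides in this cyclic order) *)
Record quad := Quad { qA : line; qB : line; qA' : line; qB' : line }.

Definition is_quad (Q : quad) : Prop :=
  (~ line_eq (qA Q) (qB Q) /\ ~ line_eq (qA Q) (qA' Q) /\ ~ line_eq (qA Q) (qB' Q) /\
   ~ line_eq (qB Q) (qA' Q) /\ ~ line_eq (qB Q) (qB' Q) /\ ~ line_eq (qA' Q) (qB' Q))
  /\ ~ (exists p, [&& on_line (qA Q) p, on_line (qB Q) p, on_line (qA' Q) p
                     & on_line (qB' Q) p])
  /\ [/\ ~~ parallel (qA Q) (qB Q), ~~ parallel (qB Q) (qA' Q),
         ~~ parallel (qA' Q) (qB' Q) & ~~ parallel (qB' Q) (qA Q)].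

Definition standard (Q : quad) : Prop :=
  (forall p, on_line (qA Q) p = (p.2 == 0)) /\
  (forall p, on_line (qA' Q) p = (p.1 == 0)).

Definition coefficient (Q : quad) : K := slope (qB Q) * slope (qB' Q).

Definition centroid (Q : quad) (g : point) : Prop :=
  exists v1 v2 v3 v4 : point,
    [/\ on_line (qA Q) v1 && on_line (qB Q) v1,
        on_line (qB Q) v2 && on_line (qA' Q) v2,
        on_line (qA' Q) v3 && on_line (qB' Q) v3,
        on_line (qB' Q) v4 && on_line (qA Q) v4 &
        g = ((v1.1 + v2.1 + v3.1 + v4.1) / 4%:R,
             (v1.2 + v2.2 + v3.2 + v4.2) / 4%:R)].

Definition crosses (l l1 l2 : line) : Prop :=
  ~ line_eq l l1 /\ ~ line_eq l l2 /\ ~ (parallel l l1 && parallel l l2).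

(* mid_{l1,l2}(l) = m.  Points are taken in the projective plane, but only
   points of l occur here, so [None] stands for the point at infinity of l
   and [Some p] for the affine point p. *)
Definition mid_is (l l1 l2 : line) (m : option point) : Prop :=
  if parallel l l1 || parallel l l2 then m = None
  else exists p1 p2 : point,
      [/\ on_line l p1, on_line l1 p1, on_line l p2, on_line l2 p2
        & m = Some (midpt p1 p2)].

Definition bisector_with (Q : quad) (l : line) (m : option point) : Prop :=
  (crosses l (qA Q) (qA' Q) \/ crosses l (qB Q) (qB' Q)) /\
  (crosses l (qA Q) (qA' Q) -> mid_is l (qA Q) (qA' Q) m) /\
  (crosses l (qB Q) (qB' Q) -> mid_is l (qB Q) (qB' Q) m).

End Geometry.

(* Main.v *)
Require Import Defs.
From HB Require Import structures.
From mathcomp Require Import all_boot all_order all_algebra.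
From mathcomp Require Import ring.
Set Implicit Arguments. Unset Strict Implicit.
Import GRing.Theory.
Local Open Scope ring_scope.

Ltac fld := field; repeat (apply/andP; split); try assumption.

Section Aux.
Variable K : fieldType.
Hypothesis charK : (2%:R : K) != 0.
Implicit Types l : line K.

Lemma four_nz : (4%:R : K) != 0.
Proof. have -> : (4%:R : K) = 2%:R * 2%:R by rewrite -natrM. by rewrite mulf_neq0. Qed.

Lemma prop_line_eq l1 l2 t : t != 0 -> la l1 = t * la l2 -> lb l1 = t * lb l2 ->
  lc l1 = t * lc l2 -> line_eq l1 l2.
Proof.
move=> tnz h1 h2 h3 p; rewrite /on_line h1 h2 h3 -!mulrA -mulrDr.
exact: (inj_eq (mulfI tnz)).
Qed.

Lemma line_eq_par l1 l2 : line_eq l1 l2 -> parallel l1 l2.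
Proof.
case: l2 => a2 b2 c2 h2 E; rewrite /parallel /=.
case: (eqVneq b2 0) => [b0|bnz].
- have a2nz : a2 != 0 by have := h2; rewrite b0 eqxx orbF.
  have h0 := E (c2/a2, 0). have h1 := E (c2/a2 + b2, -a2).
  rewrite /on_line /= in h0 h1.
  have t0 : a2 * (c2/a2) + b2 * 0 == c2 by apply/eqP; rewrite b0; field.
  have t1 : a2 * (c2/a2 + b2) + b2 * (-a2) == c2 by apply/eqP; rewrite b0; field.
  rewrite t0 in h0; rewrite t1 in h1. move/eqP: h0 => h0; move/eqP: h1 => h1.
  apply/eqP; rewrite b0 mulr0.
  have -> : lb l1 * a2 = (la l1 * (c2/a2) + lb l1 * 0) - (la l1 * (c2/a2 + b2) + lb l1 * (-a2)) by rewrite b0; ring.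
  by rewrite h0 h1 subrr.
- have h0 := E (0, c2/b2). have h1 := E (b2, (c2 - a2 * b2)/b2).
  rewrite /on_line /= in h0 h1.
  have t0 : a2 * 0 + b2 * (c2/b2) == c2 by apply/eqP; field.
  have t1 : a2 * b2 + b2 * ((c2 - a2 * b2)/b2) == c2 by apply/eqP; field.
  rewrite t0 in h0; rewrite t1 in h1. move/eqP: h0 => h0; move/eqP: h1 => h1.
  have : la l1 * b2 - lb l1 * a2 = (la l1 * b2 + lb l1 * ((c2 - a2 * b2)/b2)) - (la l1 * 0 + lb l1 * (c2/b2)) by field.
  by rewrite h0 h1 subrr => /eqP; rewrite subr_eq0.
Qed.

Lemma inter_unique l1 l2 p q : ~~ parallel l1 l2 -> on_line l1 p -> on_line l2 p ->
  on_line l1 q -> on_line l2 q -> p = q.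
Proof.
rewrite /parallel => np /eqP h1 /eqP h2 /eqP h3 /eqP h4.
have Dnz : la l1 * lb l2 - lb l1 * la l2 != 0 by rewrite subr_eq0.
case: p q h1 h2 h3 h4 => [x y] [x' y'] /= h1 h2 h3 h4.
have ex : (x - x') * (la l1 * lb l2 - lb l1 * la l2) =
  lb l2 * ((la l1 * x + lb l1 * y) - (la l1 * x' + lb l1 * y'))
  - lb l1 * ((la l2 * x + lb l2 * y) - (la l2 * x' + lb l2 * y')) by ring.
have ey : (y - y') * (la l1 * lb l2 - lb l1 * la l2) =
  la l1 * ((la l2 * x + lb l2 * y) - (la l2 * x' + lb l2 * y'))
  - la l2 * ((la l1 * x + lb l1 * y) - (la l1 * x' + lb l1 * y')) by ring.
rewrite h1 h2 h3 h4 !subrr !mulr0 subr0 in ex ey.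
move/eqP: ex; rewrite mulf_eq0 (negbTE Dnz) orbF subr_eq0 => /eqP ->.
by move/eqP: ey; rewrite mulf_eq0 (negbTE Dnz) orbF subr_eq0 => /eqP ->.
Qed.

Lemma mid_isE l l1 l2 m p1 p2 : ~~ parallel l l1 -> ~~ parallel l l2 ->
  on_line l p1 -> on_line l1 p1 -> on_line l p2 -> on_line l2 p2 ->
  (mid_is l l1 l2 m <-> m = Some (midpt p1 p2)).
Proof.
move=> n1 n2 a1 b1 a2 b2; rewrite /mid_is (negbTE n1) (negbTE n2) /=.
split => [[q1 [q2 [c1 d1 c2 d2 ->]]]|->]; last by exists p1, p2.
by rewrite (inter_unique n1 c1 d1 a1 b1) (inter_unique n2 c2 d2 a2 b2).
Qed.

Lemma mid_is_par l l1 l2 m : parallel l l1 || parallel l l2 ->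
  (mid_is l l1 l2 m <-> m = None).
Proof. by rewrite /mid_is => ->. Qed.

Lemma crosses_np l l1 l2 : ~~ parallel l l1 -> ~~ parallel l l2 -> crosses l l1 l2.
Proof.
move=> n1 n2; split; [|split].
- by move/line_eq_par; apply/negP.
- by move/line_eq_par; apply/negP.
- by rewrite (negbTE n1).
Qed.

Definition Fp (a b e a1 b1 e1 a2 b2 e2 : K) :=
  e*a^+2*b1*b2 - e*a1*a2*b^+2 - (e1*b2 + e2*b1)*a^+2*b + (e1*a2+e2*a1)*a*b^+2.

Lemma Fp_sym a b e a1 b1 e1 a2 b2 e2 :
  Fp a b e a1 b1 e1 a2 b2 e2 = Fp a b e a2 b2 e2 a1 b1 e1.
Proof. by rewrite /Fp; ring. Qed.

Lemma Fp_par a b e a1 b1 e1 a2 b2 e2 : b != 0 -> a*b1 = b*a1 ->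
  Fp a b e a1 b1 e1 a2 b2 e2 = a*(e*b1 - e1*b)*(a*b2 - b*a2).
Proof.
move=> bnz h. have ea1 : a1 = a*b1/b by rewrite h; field.
by rewrite /Fp ea1; field.
Qed.


Definition ix (a b e a1 b1 e1 : K) := (e*b1 - b*e1)/(a*b1 - b*a1).
Definition iy (a b e a1 b1 e1 : K) := (a*e1 - e*a1)/(a*b1 - b*a1).

Lemma on_ix a b e a1 b1 e1 : a*b1 - b*a1 != 0 ->
  a * ix a b e a1 b1 e1 + b * iy a b e a1 b1 e1 = e /\
  a1 * ix a b e a1 b1 e1 + b1 * iy a b e a1 b1 e1 = e1.
Proof. move=> D; rewrite /ix /iy; split. field. exact: D. field. exact: D. Qed.

Lemma alg_x a b e a1 b1 e1 a2 b2 e2 : a != 0 -> a*b1 - b*a1 != 0 -> a*b2 - b*a2 != 0 ->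
  (ix a b e a1 b1 e1 + ix a b e a2 b2 e2)/2%:R - (e/a + 0)/2%:R =
  Fp a b e a1 b1 e1 a2 b2 e2 / (2%:R * a * (a*b1 - b*a1) * (a*b2 - b*a2)).
Proof. by move=> anz D1 D2; rewrite /ix /Fp; field; rewrite D1 D2 anz charK. Qed.

Lemma alg_y a b e a1 b1 e1 a2 b2 e2 : b != 0 -> a*b1 - b*a1 != 0 -> a*b2 - b*a2 != 0 ->
  (iy a b e a1 b1 e1 + iy a b e a2 b2 e2)/2%:R - (0 + e/b)/2%:R =
  - Fp a b e a1 b1 e1 a2 b2 e2 / (2%:R * b * (a*b1 - b*a1) * (a*b2 - b*a2)).
Proof. by move=> anz D1 D2; rewrite /iy /Fp; field; rewrite D1 D2 anz charK. Qed.
Definition Char (c : K) (g : point K) (l : line K) (m : option (point K)) : Prop :=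
  if (la l != 0) && (lb l != 0) then
    m = Some (midpt (lc l / la l, 0) (0, lc l / lb l)) /\
    lc l * la l ^+ 2 - lc l * c * lb l ^+ 2 - 4%:R * g.2 * la l ^+ 2 * lb l
      + 4%:R * g.1 * c * la l * lb l ^+ 2 = 0
  else if la l == 0 then lc l = 0 /\ m = Some (2%:R * g.1, 0)
  else lc l = 0 /\ m = Some (0, 2%:R * g.2).

Lemma key (Q : quad K) g : is_quad Q -> standard Q -> centroid Q g ->
  forall l m, bisector_with Q l m <-> Char (coefficient Q) g l m.
Proof.
case: Q => [[aA bA cA hA] [a1 b1 e1 h1] [aA' bA' cA' hA'] [a2 b2 e2 h2]].
move=> [_ [_ [pAB pBA' pA'B' pB'A]]] [sA sA'] [v1 [v2 [v3 [v4 [hv1 hv2 hv3 hv4 hg]]]]].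
rewrite /= in sA sA' hv1 hv2 hv3 hv4 hg pAB pBA' pA'B' pB'A *.
have cA0 : cA = 0.
  by have := sA (0,0); rewrite /on_line /= !mulr0 addr0 eqxx eq_sym => /eqP.
subst cA.
have aA0 : aA = 0.
  by have := sA (1,0); rewrite /on_line /= !mulr0 mulr1 addr0 eqxx => /eqP.
subst aA.
have cA'0 : cA' = 0.
  by have := sA' (0,0); rewrite /on_line /= !mulr0 addr0 eqxx eq_sym => /eqP.
subst cA'.
have bA'0 : bA' = 0.
  by have := sA' (0,1); rewrite /on_line /= !mulr0 mulr1 add0r eqxx => /eqP.
subst bA'.
have bAnz : bA != 0 by move: (hA); rewrite eqxx.
have aA'nz : aA' != 0 by move: (hA'); rewrite eqxx orbF.
have a1nz : a1 != 0 by move: pAB; rewrite /parallel /= mul0r eq_sym mulf_eq0 negb_or => /andP [].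
have b1nz : b1 != 0 by move: pBA'; rewrite /parallel /= mulr0 eq_sym mulf_eq0 negb_or => /andP [].
have b2nz : b2 != 0 by move: pA'B'; rewrite /parallel /= mul0r mulf_eq0 negb_or => /andP [].
have a2nz : a2 != 0 by move: pB'A; rewrite /parallel /= mulr0 mulf_eq0 negb_or => /andP [].
move: hv1; rewrite sA => /andP [/eqP y1 /eqP hb1].
move: hv2; rewrite sA' => /andP [/eqP hb2 /eqP x2].
move: hv3; rewrite sA' => /andP [/eqP x3 /eqP hb3].
move: hv4; rewrite sA => /andP [/eqP hb4 /eqP y4].
rewrite /= in hb1 hb2 hb3 hb4.
have x1 : v1.1 = e1 / a1 by rewrite -hb1 y1; field.
have y2 : v2.2 = e1 / b1 by rewrite -hb2 x2; field.
have y3 : v3.2 = e2 / b2 by rewrite -hb3 x3; field.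
have x4 : v4.1 = e2 / a2 by rewrite -hb4 y4; field.
rewrite x1 y1 x2 y2 x3 y3 x4 y4 in hg; subst g.
rewrite /coefficient /slope /=.
set A := @Line _ 0 bA 0 hA.
set A' := @Line _ aA' 0 0 hA'.
set B := @Line _ a1 b1 e1 h1.
set B' := @Line _ a2 b2 e2 h2.
have four := four_nz.
case=> a b e hl m; rewrite /bisector_with /Char /=.
set L := @Line _ a b e hl.
have pLA : parallel L A = (a * bA == b * 0) by [].
have pLA' : parallel L A' = (a * 0 == b * aA') by [].
have pLB : parallel L B = (a * b1 == b * a1) by [].
have pLB' : parallel L B' = (a * b2 == b * a2) by [].
have midnp : forall l1 l2 m', ~~ parallel L l1 -> ~~ parallel L l2 -> mid_is L l1 l2 m' ->
    exists p, m' = Some p.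
  move=> l1 l2 m' n1 n2; rewrite /mid_is (negbTE n1) (negbTE n2) /=.
  by move=> [p1 [p2 [_ _ _ _ ->]]]; eexists.
case: (eqVneq a 0) => [a0|anz]; case: (eqVneq b 0) => [b0|bnz].
- by exfalso; have := hl; rewrite a0 b0 eqxx.
- subst a; rewrite /=.
  have nB : ~~ parallel L B by rewrite pLB mul0r eq_sym mulf_eq0 negb_or bnz a1nz.
  have nB' : ~~ parallel L B' by rewrite pLB' mul0r eq_sym mulf_eq0 negb_or bnz a2nz.
  have cB := crosses_np nB nB'.
  case: (eqVneq e 0) => [e0|enz].
  + subst e.
    have LA : line_eq L A.
      apply: (prop_line_eq (t := b/bA)) => /=; try by fld.
      by rewrite mulf_neq0 ?invr_neq0.
    have o1 : on_line L (e1/a1, 0) by rewrite /on_line /=; apply/eqP; fld.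
    have o2 : on_line B (e1/a1, 0) by rewrite /on_line /=; apply/eqP; fld.
    have o3 : on_line L (e2/a2, 0) by rewrite /on_line /=; apply/eqP; fld.
    have o4 : on_line B' (e2/a2, 0) by rewrite /on_line /=; apply/eqP; fld.
    have ME := mid_isE m nB nB' o1 o2 o3 o4.
    have eqM : midpt (e1/a1,0) (e2/a2,0) = (2%:R * ((e1/a1+0+0+e2/a2)/4%:R), 0).
      by rewrite /midpt /=; congr pair; fld.
    split.
    * by move=> [_ [_ H]]; split=> //; rewrite -eqM; apply: ME.1; exact: H.
    * move=> [_ em]; split; first by right.
      split; first by move=> [nE]; exfalso; apply: nE.
      by move=> _; apply: ME.2; rewrite em eqM.
  + have cA : crosses L A A'.
      split; [|split].
      * move=> E; have := E (0,0); rewrite sA /on_line /= !mulr0 addr0 eqxx eq_sym.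
        by rewrite (negbTE enz).
      * move=> E; have := E (0,0); rewrite sA' /on_line /= !mulr0 addr0 eqxx eq_sym.
        by rewrite (negbTE enz).
      * by rewrite pLA' mulr0 eq_sym mulf_eq0 (negbTE bnz) (negbTE aA'nz) andbF.
    split; last by move=> [/eqP]; rewrite (negbTE enz).
    move=> [_ [HA HB]].
    have := HA cA; rewrite /mid_is pLA mul0r mulr0 eqxx /= => mN.
    by have [p hp] := midnp _ _ _ nB nB' (HB cB); rewrite hp in mN.
- subst b; rewrite /=.
  have nB : ~~ parallel L B by rewrite pLB mul0r mulf_eq0 negb_or anz b1nz.
  have nB' : ~~ parallel L B' by rewrite pLB' mul0r mulf_eq0 negb_or anz b2nz.
  have cB := crosses_np nB nB'.
  case: (eqVneq e 0) => [e0|enz].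
  + subst e.
    have LA : line_eq L A'.
      apply: (prop_line_eq (t := a/aA')) => /=; try by fld.
      by rewrite mulf_neq0 ?invr_neq0.
    have o1 : on_line L (0, e1/b1) by rewrite /on_line /=; apply/eqP; fld.
    have o2 : on_line B (0, e1/b1) by rewrite /on_line /=; apply/eqP; fld.
    have o3 : on_line L (0, e2/b2) by rewrite /on_line /=; apply/eqP; fld.
    have o4 : on_line B' (0, e2/b2) by rewrite /on_line /=; apply/eqP; fld.
    have ME := mid_isE m nB nB' o1 o2 o3 o4.
    have eqM : midpt (0, e1/b1) (0, e2/b2) = (0, 2%:R * ((0 + e1/b1+e2/b2+0)/4%:R)).
      by rewrite /midpt /=; congr pair; fld.
    split.
    * by move=> [_ [_ H]]; split=> //; rewrite -eqM; apply: ME.1; exact: H.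
    * move=> [_ em]; split; first by right.
      split; first by move=> [_ [nE]]; exfalso; apply: nE.
      by move=> _; apply: ME.2; rewrite em eqM.
  + have cA : crosses L A A'.
      split; [|split].
      * move=> E; have := E (0,0); rewrite sA /on_line /= !mulr0 addr0 eqxx eq_sym.
        by rewrite (negbTE enz).
      * move=> E; have := E (0,0); rewrite sA' /on_line /= !mulr0 addr0 eqxx eq_sym.
        by rewrite (negbTE enz).
      * by rewrite pLA mulr0 mulf_eq0 (negbTE anz) (negbTE bAnz).
    split; last by move=> [/eqP]; rewrite (negbTE enz).
    move=> [_ [HA HB]].
    have := HA cA; rewrite /mid_is pLA' mul0r mulr0 eqxx orbT /= => mN.
    by have [p hp] := midnp _ _ _ nB nB' (HB cB); rewrite hp in mN.
- rewrite /=.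
  have nLA : ~~ parallel L A by rewrite pLA mulr0 mulf_eq0 negb_or anz bAnz.
  have nLA' : ~~ parallel L A' by rewrite pLA' mulr0 eq_sym mulf_eq0 negb_or bnz aA'nz.
  have cAA := crosses_np nLA nLA'.
  have midA : mid_is L A A' m <-> m = Some (midpt (e/a,0) (0,e/b)).
    apply: mid_isE nLA nLA' _ _ _ _.
    + by rewrite /on_line /=; apply/eqP; field.
    + by rewrite sA.
    + by rewrite /on_line /=; apply/eqP; field.
    + by rewrite sA'.
  match goal with |- _ <-> _ /\ ?X = 0 =>
    have CEFp : X = Fp a b e a1 b1 e1 a2 b2 e2 / (b1*b2) by rewrite /Fp; fld end.
  rewrite CEFp.
  have main : (crosses L B B' -> mid_is L B B' (Some (midpt (e/a,0) (0,e/b)))) <->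
     Fp a b e a1 b1 e1 a2 b2 e2 = 0.
    set M0 := midpt (e/a,0) (0,e/b).
    case: (eqVneq (a*b1) (b*a1)) => pB; case: (eqVneq (a*b2) (b*a2)) => pB'.
    * rewrite (Fp_par e e1 a2 b2 e2 bnz pB) pB' subrr mulr0; split=> // _ [_ [_ H]].
      by exfalso; apply: H; rewrite pLB pLB' pB pB' !eqxx.
    * rewrite (Fp_par e e1 a2 b2 e2 bnz pB); split.
      - move=> H; case: (eqVneq (e*b1) (e1*b)) => he; first by rewrite he subrr mulr0 mul0r.
        exfalso.
        have cr : crosses L B B'.
          split; [|split].
          + move=> E; have := E (0, e1/b1); rewrite /on_line /=.
            have -> : a1*0 + b1*(e1/b1) == e1 by apply/eqP; fld.
            move=> /eqP h; move/eqP: he; apply; rewrite -h; fld.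
          + by move/line_eq_par; rewrite pLB' (negbTE pB').
          + by rewrite pLB' (negbTE pB') andbF.
        by have := H cr; rewrite /mid_is pLB pB eqxx.
      - move=> hF [nE _]; exfalso.
        have he : e*b1 = e1*b.
          move/eqP: hF; rewrite !mulf_eq0 (negbTE anz) !subr_eq0 (negbTE pB') orbF /=.
          by move/eqP.
        apply: nE; apply: (prop_line_eq (t := b/b1)) => /=.
        + by rewrite mulf_neq0 ?invr_neq0.
        + by apply: (mulIf b1nz); rewrite pB; fld.
        + by fld.
        + by apply: (mulIf b1nz); rewrite he; fld.
    * rewrite Fp_sym (Fp_par e e2 a1 b1 e1 bnz pB'); split.
      - move=> H; case: (eqVneq (e*b2) (e2*b)) => he; first by rewrite he subrr mulr0 mul0r.
        exfalso.
        have cr : crosses L B B'.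
          split; [|split].
          + by move/line_eq_par; rewrite pLB (negbTE pB).
          + move=> E; have := E (0, e2/b2); rewrite /on_line /=.
            have -> : a2*0 + b2*(e2/b2) == e2 by apply/eqP; fld.
            move=> /eqP h; move/eqP: he; apply; rewrite -h; fld.
          + by rewrite pLB (negbTE pB).
        by have := H cr; rewrite /mid_is pLB' pB' eqxx orbT.
      - move=> hF [_ [nE _]]; exfalso.
        have he : e*b2 = e2*b.
          move/eqP: hF; rewrite !mulf_eq0 (negbTE anz) !subr_eq0 (negbTE pB) orbF /=.
          by move/eqP.
        apply: nE; apply: (prop_line_eq (t := b/b2)) => /=.
        + by rewrite mulf_neq0 ?invr_neq0.
        + by apply: (mulIf b2nz); rewrite pB'; fld.
        + by fld.
        + by apply: (mulIf b2nz); rewrite he; fld.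
    * have nB : ~~ parallel L B by rewrite pLB pB.
      have nB' : ~~ parallel L B' by rewrite pLB' pB'.
      have D1 : a*b1 - b*a1 != 0 by rewrite subr_eq0.
      have D2 : a*b2 - b*a2 != 0 by rewrite subr_eq0.
      have cr := crosses_np nB nB'.
      have [o1 o2] := on_ix e e1 D1.
      have [o3 o4] := on_ix e e2 D2.
      have ME := mid_isE (Some M0) (p1 := (ix a b e a1 b1 e1, iy a b e a1 b1 e1))
        (p2 := (ix a b e a2 b2 e2, iy a b e a2 b2 e2)) nB nB' (introT eqP o1) (introT eqP o2)
        (introT eqP o3) (introT eqP o4).
      split.
      - move=> H; have := H cr; move/ME => [hx _].
        have := alg_x e e1 e2 anz D1 D2; rewrite /M0 /midpt /= in hx.
        rewrite -hx subrr => /esym /eqP; rewrite mulf_eq0 invr_eq0 !mulf_eq0.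
        by rewrite (negbTE D1) (negbTE D2) (negbTE anz) (negbTE charK) !orbF => /eqP.
      - move=> hF _; apply/ME; rewrite /M0 /midpt /=; congr (Some (_, _)).
        + apply/eqP; rewrite eq_sym -subr_eq0 (alg_x e e1 e2 anz D1 D2) hF.
          by rewrite mul0r.
        + apply/eqP; rewrite eq_sym -subr_eq0 (alg_y e e1 e2 bnz D1 D2) hF.
          by rewrite oppr0 mul0r.
  split.
  + move=> [_ [HA HB]]. have em := (midA.1 (HA cAA)). split; first exact em.
    by subst m; rewrite (main.1 HB) mul0r.
  + move=> [em hce]. have hF : Fp a b e a1 b1 e1 a2 b2 e2 = 0.
      move: hce => /(congr1 (fun x => x * (b1*b2))).
      by rewrite mul0r divfK ?mulf_neq0.
    split; [by left | split; [by move=> _; apply/midA | by rewrite em; apply/main]].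
Qed.
End Aux.

Theorem corollary4p6 (K : fieldType) (charK : (2%:R : K) != 0)
    (Q1 Q2 : quad K) :
  is_quad Q1 -> is_quad Q2 -> standard Q1 -> standard Q2 ->
  coefficient Q1 = coefficient Q2 ->
  (exists g : point K, centroid Q1 g /\ centroid Q2 g) ->
  forall (l : line K) (m : option (point K)),
    bisector_with Q1 l m <-> bisector_with Q2 l m.
Proof.
move=> q1 q2 s1 s2 hc [g [g1 g2]] l m.
apply: iff_trans (key charK q1 s1 g1 l m) _.
rewrite hc; apply: iff_sym; exact: (key charK q2 s2 g2 l m).
Qed.
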